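(* Let $A$ be a nondegenerate finite quadratic form, and let $Q$ be a fixed finite orthogonal direct sum of copies of $u(2)$ and $v(2)$ such that there exists an embedding $Q\hookrightarrow A$. Then the orthogonal complement $Q^\perp\subset A$ is determined uniquely up to isometry by $A$ and $Q$; that is, for any two embeddings $Q\hookrightarrow A$, the orthogonal complements of the images are isometric finite quadratic forms.
   Context: A finite quadratic form is a finite abelian group $A$ with a quadratic form $q:A\to\mathbb Q/2\mathbb Z$ whose associated bilinear form $b:A\times A\to\mathbb Q/\mathbb Z$ is symmetric bilinear with $q(x+y)=q(x)+q(y)+2b(x,y)$; it is nondegenerate if $b$ is. An embedding is an injective homomorphism preserving $q$, and $Q^\perp$ is the orthogonal complement with respect to $b$. The forms $u(2)$ and $v(2)$ are on $(\mathbb Z/2\mathbb Z)^2$ with Gram matrices $\begin{pmatrix}0&1/2\\1/2&0\end{pmatrix}$ and $\begin{pmatrix}1&1/2\\1/2&1\end{pmatrix}$ respectively, diagonal entries (values of $q$) in $\mathbb Q/2\mathbb Z$ and off-diagonal entries in $\mathbb Q/\mathbb Z$ (they are the discriminant forms of even 2-adic lattices $2^{+2}_{II}$ and $2^{-2}_{II}$, e.g. of $U(2)$ resp. $D_4$). *)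

(* Defs.v *)
From HB Require Import structures.
From mathcomp Require Import all_boot all_order all_algebra.
Set Implicit Arguments. Unset Strict Implicit. Unset Printing Implicit Defensive.
Import Order.TTheory GRing.Theory Num.Theory.
Local Open Scope ring_scope.

(* Values of quadratic forms in Q/2Z and bilinear forms in Q/Z are
   represented by rational representatives, compared modulo 2Z resp. Z. *)
Definition eqmodZ (a b : rat) : bool := (a - b) \is a Num.int.
Definition eqmod2Z (a b : rat) : bool := ((a - b) / 2) \is a Num.int.

Definition is_fqf (A : finZmodType) (q : A -> rat) (b : A -> A -> rat) : Prop :=
  [/\ (forall x y, eqmodZ (b x y) (b y x)),
      (forall x y z, eqmodZ (b (x + y) z) (b x z + b y z)),
      (forall x y z, eqmodZ (b x (y + z)) (b x y + b x z)) &
      (forall x y, eqmod2Z (q (x + y)) (q x + q y + 2 * b x y))].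

Definition fqf_nondegenerate (A : finZmodType) (b : A -> A -> rat) : Prop :=
  forall x : A, (forall y : A, eqmodZ (b x y) 0) -> x = 0.

Definition is_embedding (Q A : finZmodType) (qQ : Q -> rat) (qA : A -> rat)
  (f : Q -> A) : Prop :=
  [/\ (forall x y, f (x + y) = f x + f y), injective f &
      (forall x, eqmod2Z (qA (f x)) (qQ x))].

Definition orth_compl (Q A : finZmodType) (b : A -> A -> rat) (f : Q -> A)
  : {set A} :=
  [set x : A | [forall y : Q, eqmodZ (b x (f y)) 0]].

Definition isometric_sub (A : finZmodType) (qA : A -> rat) (P1 P2 : {set A})
  : Prop :=
  exists h : A -> A,
    [/\ {in P1 &, forall x y, h (x + y) = h x + h y},
        {in P1, forall x, h x \in P2},
        {in P1 &, injective h},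
        (forall y, y \in P2 -> exists2 x, x \in P1 & h x = y) &
        {in P1, forall x, eqmod2Z (qA (h x)) (qA x)}].

(* The forms u(2) and v(2) on (Z/2)^2, for a pair (a, c) of elements of Z/2
   (viewed as 0 or 1): Gram matrices [[0,1/2],[1/2,0]] and [[1,1/2],[1/2,1]]
   give q_u2(a,c) = a*c and q_v2(a,c) = a^2 + a*c + c^2 (mod 2). *)
Definition q_u2 (a c : 'Z_2) : rat := ((a : nat) * (c : nat))%:R.
Definition q_v2 (a c : 'Z_2) : rat :=
  ((a : nat) * (a : nat) + (a : nat) * (c : nat) + (c : nat) * (c : nat))%:R.

(* Orthogonal direct sum of copies of u(2) (entry false of s) and v(2)
   (entry true of s): the group ((Z/2)^2)^(size s), realised as matrices
   with one row (a copy of (Z/2)^2) per summand. *)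
Definition sumUV (s : seq bool) : finZmodType := 'M['Z_2]_(size s, 2).

Definition q_sumUV (s : seq bool) (x : sumUV s) : rat :=
  \sum_(i < size s)
    (if nth false s i then q_v2 (x i ord0) (x i ord_max)
     else q_u2 (x i ord0) (x i ord_max)).

(* Main.v *)
Require Import Defs.
From HB Require Import structures.
From mathcomp Require Import all_boot all_order all_algebra.
From mathcomp Require Import zify ring.
Set Implicit Arguments. Unset Strict Implicit. Unset Printing Implicit Defensive.
Import Order.TTheory GRing.Theory Num.Theory.
Local Open Scope ring_scope.


Lemma mZ_refl a : eqmodZ a a. Proof. by rewrite /eqmodZ subrr rpred0. Qed.
Lemma mZ_sym a b : eqmodZ a b -> eqmodZ b a.
Proof. by rewrite /eqmodZ -opprB rpredN. Qed.
Lemma mZ_trans a b c : eqmodZ a b -> eqmodZ b c -> eqmodZ a c.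
Proof. rewrite /eqmodZ => h1 h2. have := rpredD h1 h2. by rewrite addrA subrK. Qed.
Lemma mZ_add a b c d : eqmodZ a b -> eqmodZ c d -> eqmodZ (a + c) (b + d).
Proof. rewrite /eqmodZ => h1 h2. have := rpredD h1 h2.
  by rewrite opprD addrACA. Qed.
Lemma mZ_opp a b : eqmodZ a b -> eqmodZ (- a) (- b).
Proof. by rewrite /eqmodZ -opprD rpredN. Qed.
Lemma mZ_int a : a \is a Num.int -> eqmodZ a 0.
Proof. by rewrite /eqmodZ subr0. Qed.
Lemma mZ_0int a : eqmodZ a 0 -> a \is a Num.int.
Proof. by rewrite /eqmodZ subr0. Qed.

Lemma m2_refl a : eqmod2Z a a. Proof. by rewrite /eqmod2Z subrr mul0r rpred0. Qed.
Lemma m2_sym a b : eqmod2Z a b -> eqmod2Z b a.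
Proof. by rewrite /eqmod2Z -opprB mulNr rpredN. Qed.
Lemma m2_trans a b c : eqmod2Z a b -> eqmod2Z b c -> eqmod2Z a c.
Proof. rewrite /eqmod2Z => h1 h2. have := rpredD h1 h2. by rewrite -mulrDl addrA subrK. Qed.
Lemma m2_add a b c d : eqmod2Z a b -> eqmod2Z c d -> eqmod2Z (a + c) (b + d).
Proof. rewrite /eqmod2Z => h1 h2. have := rpredD h1 h2.
  by rewrite -mulrDl opprD addrACA. Qed.
Lemma m2_mZ a b : eqmod2Z a b -> eqmodZ a b.
Proof. rewrite /eqmod2Z /eqmodZ => h. have := rpredMn 2 h.
  by rewrite -mulr_natr mulfVK. Qed.
Lemma mZ_m2 a b : eqmodZ a b -> eqmod2Z (2 * a) (2 * b).
Proof. by rewrite /eqmod2Z /eqmodZ -mulrBr mulrC mulKf. Qed.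
Lemma m2_mZ2 a b : eqmod2Z (2 * a) (2 * b) -> eqmodZ a b.
Proof. by rewrite /eqmod2Z /eqmodZ -mulrBr mulrC mulKf. Qed.
Lemma m2_mulz c a b : c \is a Num.int -> eqmod2Z a b -> eqmod2Z (c * a) (c * b).
Proof. rewrite /eqmod2Z => hc h. by rewrite -mulrBr -mulrA rpredM. Qed.
Lemma m2_int a b : eqmod2Z a b -> b \is a Num.int -> a \is a Num.int.
Proof. move=> /m2_mZ h hb. have := rpredD h hb. by rewrite subrK. Qed.

Definition br (b : bool) : rat := (b : nat)%:R.
Lemma br_int b : br b \is a Num.int. Proof. by case: b; rewrite /br ?rpred0 ?rpred1. Qed.

Definition bit (r : rat) : bool := ~~ ((r / 2) \is a Num.int).

Lemma half_not_int : ~~ ((1 / 2 : rat) \is a Num.int).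
Proof.
apply/negP => /intrP [m hm].
have : ((1%:~R : rat) == (2 * m)%:~R) by rewrite intrM -hm; apply/eqP; field.
rewrite eqr_int => /eqP h.
have : (1 %% 2 = (2 * m) %% 2)%Z by rewrite -h.
by rewrite modzMr.
Qed.

Lemma bit_br b : bit (br b) = b.
Proof. by case: b. Qed.

Lemma bit_approx r : r \is a Num.int -> eqmod2Z r (br (bit r)).
Proof.
move=> /intrP [m ->]. rewrite /bit.
have hm := divz_eq m 2.
have h0 : (0 <= m %% 2)%Z by rewrite modz_ge0.
have h1 : (m %% 2 < 2)%Z by rewrite ltz_pmod.
set k := (m %/ 2)%Z in hm *.
have [e|e] : (m %% 2 = 0 \/ m %% 2 = 1)%Z by lia.
- rewrite e addr0 in hm. rewrite hm intrM.
  have -> : (k%:~R * 2%:~R / 2 : rat) = k%:~R by field.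
  rewrite intr_int /= /br /= /eqmod2Z subr0.
  have -> : (k%:~R * 2%:~R / 2 : rat) = k%:~R by field.
  by rewrite intr_int.
- rewrite e in hm. rewrite hm intrD intrM.
  have -> : ((k%:~R * 2%:~R + 1%:~R) / 2 : rat) = k%:~R + 1/2 by field.
  have hn : ~~ ((k%:~R + 1/2 : rat) \is a Num.int).
    apply/negP => hh. have : (k%:~R + 1/2 - k%:~R : rat) \is a Num.int.
      by rewrite rpredB // intr_int.
    by rewrite addrC addKr (negbTE half_not_int).
  rewrite hn /br /eqmod2Z /=.
  have -> : ((k%:~R * 2%:~R + 1%:~R - 1%:R) / 2 : rat) = k%:~R by field.
  by rewrite intr_int.
Qed.

Lemma bit_eq r s : eqmod2Z r s -> bit r = bit s.
Proof.
rewrite /eqmod2Z /bit => h. congr negb.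
apply/idP/idP => hh.
- have := rpredB hh h. by rewrite mulrBl opprB addrC subrK.
- have := rpredD hh h. by rewrite mulrBl addrC subrK.
Qed.

Definition apx (r : rat) (c : bool) := eqmod2Z r (br c).

Lemma apx_br c : apx (br c) c. Proof. exact: m2_refl. Qed.
Lemma apx_bit r c : apx r c -> bit r = c.
Proof. by move=> /bit_eq ->; rewrite bit_br. Qed.
Lemma apx_int r c : apx r c -> r \is a Num.int.
Proof. by move=> h; apply: m2_int h (br_int c). Qed.
Lemma apx_cong r s c : eqmod2Z r s -> apx s c -> apx r c.
Proof. exact: m2_trans. Qed.
Lemma apx_add r s a c : apx r a -> apx s c -> apx (r + s) (a (+) c).
Proof.
move=> h1 h2; apply: m2_trans (m2_add h1 h2) _; clear h1 h2.
case: a; case: c; rewrite /br /= ?addr0 ?add0r ?m2_refl //.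
Qed.
Lemma apx_mul c r a : apx r a -> apx (br c * r) (c && a).
Proof.
case: c => h /=; last by rewrite /br mul0r; apply: m2_refl.
by rewrite /br mul1r.
Qed.
Lemma apx_0 : apx 0 false. Proof. exact: m2_refl. Qed.
Lemma apx_of_int r : r \is a Num.int -> apx r (bit r).
Proof. exact: bit_approx. Qed.


Lemma m2_opp a b : eqmod2Z a b -> eqmod2Z (- a) (- b).
Proof. by rewrite /eqmod2Z -opprD mulNr rpredN. Qed.
Lemma m2_2int a : a \is a Num.int -> eqmod2Z (2 * a) 0.
Proof. by move=> h; rewrite /eqmod2Z subr0 mulrC mulKf. Qed.

Section Fqf.
Variables (A : finZmodType) (q : A -> rat) (b : A -> A -> rat).
Hypothesis hA : is_fqf q b.

Lemma b_sym x y : eqmodZ (b x y) (b y x). Proof. by case: hA. Qed.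
Lemma b_addl x y z : eqmodZ (b (x + y) z) (b x z + b y z). Proof. by case: hA. Qed.
Lemma b_addr x y z : eqmodZ (b x (y + z)) (b x y + b x z). Proof. by case: hA. Qed.
Lemma q_add x y : eqmod2Z (q (x + y)) (q x + q y + 2 * b x y). Proof. by case: hA. Qed.

Lemma b0l y : b 0 y \is a Num.int.
Proof. have := b_addl 0 0 y; rewrite addr0 /eqmodZ opprD addrA subrr add0r rpredN.
  done. Qed.
Lemma b0r y : b y 0 \is a Num.int.
Proof. have := b_addr y 0 0; rewrite addr0 /eqmodZ opprD addrA subrr add0r rpredN.
  done. Qed.
Lemma q0 : eqmod2Z (q 0) 0.
Proof. have := q_add 0 0; rewrite addr0 /eqmod2Z subr0 => h.
  have h2 : (b 0 0) \is a Num.int by apply: b0l.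
  have := rpredD h h2. 
  have -> : (q 0 - (q 0 + q 0 + 2 * b 0 0)) / 2 + b 0 0 = - (q 0 / 2) by field.
  by rewrite rpredN. Qed.

Lemma tb_int x y : y + y = 0 -> 2 * b x y \is a Num.int.
Proof. move=> h; have := b_addr x y y; rewrite h /eqmodZ => h1.
  have := rpredB (b0r x) h1. have -> : b x 0 - (b x 0 - (b x y + b x y)) = 2 * b x y by ring.
  done. Qed.

Lemma tb_addl x y z : eqmod2Z (2 * b (x + y) z) (2 * b x z + 2 * b y z).
Proof. by rewrite -mulrDr; apply: mZ_m2; apply: b_addl. Qed.
Lemma tb_addr x y z : eqmod2Z (2 * b x (y + z)) (2 * b x y + 2 * b x z).
Proof. by rewrite -mulrDr; apply: mZ_m2; apply: b_addr. Qed.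
Lemma tb_sym x y : eqmod2Z (2 * b x y) (2 * b y x).
Proof. by apply: mZ_m2; apply: b_sym. Qed.

Lemma tb_q x y : eqmod2Z (2 * b x y) (q (x + y) - q x - q y).
Proof. have := q_add x y. rewrite /eqmod2Z => h.
  have -> : (2 * b x y - (q (x + y) - q x - q y)) / 2 = - ((q (x + y) - (q x + q y + 2 * b x y)) / 2) by field.
  by rewrite rpredN.
Qed.

Lemma q_tors y t : y + y = 0 -> apx (q y) t -> apx (2 * b y y) false.
Proof.
move=> hy ht. have h1 := tb_q y y. rewrite hy in h1.
apply: (apx_cong h1). rewrite /apx /br /= /eqmod2Z subr0.
have hq0 := q0. rewrite /eqmod2Z subr0 in hq0.
have hi := apx_int ht.
have -> : (q 0 - q y - q y) / 2 = q 0 / 2 - q y by field.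
by rewrite rpredB.
Qed.

Lemma iso_b (s : A -> A) : (forall x y, s (x + y) = s x + s y) ->
  (forall x, eqmod2Z (q (s x)) (q x)) -> forall x y, eqmodZ (b (s x) (s y)) (b x y).
Proof.
move=> hs hq x y; apply: m2_mZ2.
apply: m2_trans (tb_q _ _) _. rewrite -hs.
apply: m2_trans; last by apply: m2_sym; apply: tb_q.
by apply: m2_add; [apply: m2_add|]; apply: m2_opp || apply: hq; apply: hq.
Qed.

End Fqf.


Record v4 := V4 { a0 : bool; a1 : bool; a2 : bool; a3 : bool }.
Record m4 := M4 { r0 : v4; r1 : v4; r2 : v4; r3 : v4 }.

Definition vxor u v := V4 (a0 u (+) a0 v) (a1 u (+) a1 v) (a2 u (+) a2 v) (a3 u (+) a3 v).
Definition vz := V4 false false false false.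
Definition dot u v := [&& a0 u & a0 v] (+) [&& a1 u & a1 v] (+) [&& a2 u & a2 v] (+) [&& a3 u & a3 v].
Definition mapp M v := V4 (dot (r0 M) v) (dot (r1 M) v) (dot (r2 M) v) (dot (r3 M) v).
Definition v4eqb u v := [&& a0 u == a0 v, a1 u == a1 v, a2 u == a2 v & a3 u == a3 v].
Lemma v4eqbP u v : v4eqb u v -> u = v.
Proof. by case: u => [[] [] [] []]; case: v => [[] [] [] []]. Qed.

Definition allb (P : bool -> bool) := P false && P true.
Definition all4 (P : v4 -> bool) :=
  allb (fun a => allb (fun b => allb (fun c => allb (fun d => P (V4 a b c d))))).
Lemma all4P P : all4 P -> forall v, P v.
Proof. rewrite /all4 /allb => h [[] [] [] []]; move: h;
  rewrite ?andbT ?andbF /=; by move=> /and5P /= []; intros; do ? (move: (_ : is_true (_ && _)) => /andP []); intros; assumption || (repeat match goal with H : is_true (_ && _) |- _ => case/andP: H => ? ? end; assumption).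
Qed.

Section Formal.
Variables (typ : bool) (Gm : nat -> nat -> bool).
Definition gcol v j := [&& a0 v & Gm 0 j] (+) [&& a1 v & Gm 1 j] (+) [&& a2 v & Gm 2 j] (+) [&& a3 v & Gm 3 j].
Definition gam v := V4 (gcol v 0) (gcol v 1) (gcol v 2) (gcol v 3).
Definition Qf v :=
  let Q1 := a0 v && typ in
  let Q2 := Q1 (+) (a1 v && typ) (+) (a1 v && (a0 v && Gm 0 1)) in
  let Q3 := Q2 (+) (a2 v && typ) (+) (a2 v && ((a0 v && Gm 0 2) (+) (a1 v && Gm 1 2))) in
  Q3 (+) (a3 v && typ) (+) (a3 v && ((a0 v && Gm 0 3) (+) (a1 v && Gm 1 3) (+) (a2 v && Gm 2 3))).
Definition grow i := V4 (Gm i 0) (Gm i 1) (Gm i 2) (Gm i 3).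
Definition e0 := V4 true false false false.
Definition e1 := V4 false true false false.
Definition e2 := V4 false false true false.
Definition e3 := V4 false false false true.
Definition check M :=
  [&& all4 (fun p => ~~ (Qf (mapp M p) (+) dot (mapp M p) p)),
      all4 (fun p => v4eqb p (gam (mapp M p)) ==> v4eqb p vz),
      v4eqb (vxor e0 (mapp M (grow 0))) e2 &
      v4eqb (vxor e1 (mapp M (grow 1))) e3].
End Formal.

Definition GmOf (k : v4) (i j : nat) : bool :=
  match i, j with
  | 0, 1 | 1, 0 | 2, 3 | 3, 2 => true
  | 0, 2 | 2, 0 => a0 k
  | 0, 3 | 3, 0 => a1 k
  | 1, 2 | 2, 1 => a2 k
  | 1, 3 | 3, 1 => a3 k
  | _, _ => false
  end.

Definition chooseM (typ : bool) (k : v4) : m4 :=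
  match typ, a0 k, a1 k, a2 k, a3 k with
  | false, false, false, false, false => M4 (V4 false true false true) (V4 true false true false) (V4 false true false true) (V4 true false true false)
  | false, false, false, false, true => M4 (V4 true true true true) (V4 true false true false) (V4 true true true true) (V4 true false true false)
  | false, false, false, true, false => M4 (V4 false true false false) (V4 false false true false) (V4 false true false true) (V4 true false false false)
  | false, false, false, true, true => M4 (V4 false true false false) (V4 false false false true) (V4 false true false false) (V4 true false true true)
  | false, false, true, false, false => M4 (V4 false false false true) (V4 true false false false) (V4 false true false false) (V4 true false true false)
  | false, false, true, false, true => M4 (V4 false true false false) (V4 false true false true) (V4 false true false false) (V4 true false true false)
  | false, false, true, true, false => M4 (V4 false false false true) (V4 true false false false) (V4 false true false false) (V4 false false true false)
  | false, false, true, true, true => M4 (V4 false true false false) (V4 false true false true) (V4 false true false false) (V4 true true true true)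
  | false, true, false, false, false => M4 (V4 false true false true) (V4 true true true true) (V4 false true false true) (V4 true true true true)
  | false, true, false, false, true => M4 (V4 false true false false) (V4 false false false true) (V4 false true false false) (V4 true true true false)
  | false, true, false, true, false => M4 (V4 true false true false) (V4 true false false false) (V4 false true false true) (V4 true false false false)
  | false, true, false, true, true => M4 (V4 true false true false) (V4 true true true true) (V4 true false true false) (V4 true true true true)
  | false, true, true, false, false => M4 (V4 false false true false) (V4 true false false false) (V4 false true true true) (V4 true false false false)
  | false, true, true, false, true => M4 (V4 true true true true) (V4 false true false true) (V4 true true true true) (V4 false true false true)
  | false, true, true, true, false => M4 (V4 true false true false) (V4 true false false false) (V4 true true true true) (V4 true false false false)
  | false, true, true, true, true => M4 (V4 true false true false) (V4 false true false true) (V4 true false true false) (V4 false true false true)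
  | true, false, false, false, false => M4 (V4 false true false true) (V4 true false true false) (V4 false true false true) (V4 true false true false)
  | true, false, false, false, true => M4 (V4 true true true true) (V4 true false true false) (V4 true true true true) (V4 true false true false)
  | true, false, false, true, false => M4 (V4 true true true true) (V4 true false false true) (V4 false true false true) (V4 false false true true)
  | true, false, false, true, true => M4 (V4 true true true false) (V4 true false true true) (V4 true true true false) (V4 false false false true)
  | true, false, true, false, false => M4 (V4 false true true false) (V4 true true true true) (V4 false false true true) (V4 true false true false)
  | true, false, true, false, true => M4 (V4 true false true true) (V4 false true false true) (V4 true false true true) (V4 true false true false)
  | true, false, true, true, false => M4 (V4 true false true true) (V4 true true false true) (V4 true true true false) (V4 false true true true)
  | true, false, true, true, true => M4 (V4 true true true false) (V4 false true false true) (V4 true true true false) (V4 true true true true)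
  | true, true, false, false, false => M4 (V4 false true false true) (V4 true true true true) (V4 false true false true) (V4 true true true true)
  | true, true, false, false, true => M4 (V4 true false true true) (V4 true true true false) (V4 true false true true) (V4 false false false true)
  | true, true, false, true, false => M4 (V4 true false true false) (V4 false true true true) (V4 false true false true) (V4 false true true true)
  | true, true, false, true, true => M4 (V4 true false true false) (V4 true true true true) (V4 true false true false) (V4 true true true true)
  | true, true, true, false, false => M4 (V4 false true true true) (V4 true true false true) (V4 false false true false) (V4 true true false true)
  | true, true, true, false, true => M4 (V4 true true true true) (V4 false true false true) (V4 true true true true) (V4 false true false true)
  | true, true, true, true, false => M4 (V4 true false true false) (V4 true true false true) (V4 true true true true) (V4 true true false true)
  | true, true, true, true, true => M4 (V4 true false true false) (V4 false true false true) (V4 true false true false) (V4 false true false true)  end.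

Lemma check_all typ k : check typ (GmOf k) (chooseM typ k).
Proof. by case: typ; case: k => [[] [] [] []]; vm_compute. Qed.


Lemma dot_xor r u v : dot r (vxor u v) = dot r u (+) dot r v.
Proof.
have hd : forall a c d : bool, a && (c (+) d) = (a && c) (+) (a && d) by do 3 case.
have hr : forall a c d e f g h i : bool,
  (a (+) c) (+) (d (+) e) (+) (f (+) g) (+) (h (+) i) =
  (a (+) d (+) f (+) h) (+) (c (+) e (+) g (+) i) by do 8 case.
by case: r u v => ? ? ? ? [? ? ? ?] [? ? ? ?]; rewrite /dot /vxor /= !hd hr.
Qed.
Lemma mapp_xor M u v : mapp M (vxor u v) = vxor (mapp M u) (mapp M v).
Proof. by rewrite /mapp /vxor /= !dot_xor. Qed.
Lemma mapp_vz M : mapp M vz = vz.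
Proof. by case: M => [[? ? ? ?] [? ? ? ?] [? ? ? ?] [? ? ? ?]]; rewrite /mapp /dot /= !andbF. Qed.

Section Plane.
Variables (A : finZmodType) (q : A -> rat) (b : A -> A -> rat).
Hypothesis hA : is_fqf q b.
Variables (typ : bool) (Gm : nat -> nat -> bool) (y : nat -> A) (M : m4).
Hypothesis hy2 : forall i, (i < 4)%N -> y i + y i = 0.
Hypothesis hyq : forall i, (i < 4)%N -> apx (q (y i)) typ.
Hypothesis hyg : forall i j, (i < 4)%N -> (j < 4)%N -> apx (2 * b (y i) (y j)) (Gm i j).
Hypothesis hchk : check typ Gm M.

Definition lin v := y 0 *+ a0 v + y 1 *+ a1 v + y 2 *+ a2 v + y 3 *+ a3 v.
Definition phi x := V4 (bit (2 * b x (y 0))) (bit (2 * b x (y 1)))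
                       (bit (2 * b x (y 2))) (bit (2 * b x (y 3))).
Definition tauM x := x + lin (mapp M (phi x)).

Lemma mulrnb (z : A) (a : bool) : z *+ a = if a then z else 0.
Proof. by case: a. Qed.

Lemma q_mb z (a : bool) t : apx (q z) t -> apx (q (z *+ a)) (a && t).
Proof. case: a => // _ /=; rewrite mulr0n; exact: q0 hA. Qed.

Lemma q_step l z (a : bool) Ql t G : apx (q l) Ql -> apx (q z) t -> apx (2 * b l z) G ->
  apx (q (l + z *+ a)) (Ql (+) (a && t) (+) (a && G)).
Proof.
case: a => /= h1 h2 h3; last by rewrite mulr0n addr0 !addbF.
rewrite mulr1n; apply: apx_cong (q_add hA l z) _.
by apply: apx_add => //; apply: apx_add.
Qed.

Lemma tbl_base z (a : bool) w H : apx (2 * b z w) H -> apx (2 * b (z *+ a) w) (a && H).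
Proof. case: a => //= _; rewrite mulr0n; apply: apx_cong apx_0.
  apply: m2_trans (m2_2int (b0l hA w)) _; exact: m2_refl. Qed.
Lemma tbr_base x z (a : bool) H : apx (2 * b x z) H -> apx (2 * b x (z *+ a)) (a && H).
Proof. case: a => //= _; rewrite mulr0n; apply: apx_cong apx_0.
  apply: m2_trans (m2_2int (b0r hA x)) _; exact: m2_refl. Qed.

Lemma tbl_step l z (a : bool) w G H : apx (2 * b l w) G -> apx (2 * b z w) H ->
  apx (2 * b (l + z *+ a) w) (G (+) (a && H)).
Proof. move=> h1 h2; apply: apx_cong (tb_addl hA _ _ _) _.
  apply: apx_add => //; exact: tbl_base. Qed.
Lemma tbr_step x l z (a : bool) G H : apx (2 * b x l) G -> apx (2 * b x z) H ->
  apx (2 * b x (l + z *+ a)) (G (+) (a && H)).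
Proof. move=> h1 h2; apply: apx_cong (tb_addr hA _ _ _) _.
  apply: apx_add => //; exact: tbr_base. Qed.

Lemma lin_q v : apx (q (lin v)) (Qf typ Gm v).
Proof.
rewrite /lin /Qf.
apply: q_step; [| by apply: hyq | ].
- apply: q_step; [| by apply: hyq | ].
  + apply: q_step; [ by apply: q_mb; apply: hyq | by apply: hyq | ].
    by apply: tbl_base; apply: hyg.
  + by apply: tbl_step; [apply: tbl_base|]; apply: hyg.
- by apply: tbl_step; [apply: tbl_step; [apply: tbl_base|]|]; apply: hyg.
Qed.

Lemma phi_apx x j : (j < 4)%N -> apx (2 * b x (y j)) (bit (2 * b x (y j))).
Proof. by move=> hj; apply: apx_of_int; apply: tb_int hA _ _ (hy2 hj). Qed.

Lemma lin_b x v : apx (2 * b x (lin v)) (dot v (phi x)).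
Proof.
rewrite /lin /dot /phi /=.
by apply: tbr_step; [apply: tbr_step; [apply: tbr_step; [apply: tbr_base|]|]|];
  apply: phi_apx.
Qed.

Lemma lin_gcol v j : (j < 4)%N -> apx (2 * b (lin v) (y j)) (gcol Gm v j).
Proof.
move=> hj; rewrite /lin /gcol.
by apply: tbl_step; [apply: tbl_step; [apply: tbl_step; [apply: tbl_base|]|]|];
  apply: hyg.
Qed.

Lemma phi_lin v : phi (lin v) = gam Gm v.
Proof. by rewrite /phi /gam; congr V4; apply: apx_bit; apply: lin_gcol. Qed.

Lemma phi_add x z : phi (x + z) = vxor (phi x) (phi z).
Proof.
rewrite /phi /vxor /=; congr V4; apply: apx_bit;
  (apply: apx_cong (tb_addl hA _ _ _) _; apply: apx_add; apply: phi_apx => //).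
Qed.

Lemma mb_xor (z : A) (a c : bool) : z + z = 0 -> z *+ a + z *+ c = z *+ (a (+) c).
Proof. by move=> h; case: a; case: c => /=; rewrite ?mulr0n ?mulr1n ?addr0 ?add0r. Qed.

Lemma lin_add u v : lin u + lin v = lin (vxor u v).
Proof.
rewrite /lin /vxor /= -(mb_xor _ _ (hy2 (i:=0) _)) // -(mb_xor _ _ (hy2 (i:=1) _)) //
  -(mb_xor _ _ (hy2 (i:=2) _)) // -(mb_xor _ _ (hy2 (i:=3) _)) //.
rewrite addrACA; congr (_ + _); rewrite addrACA; congr (_ + _); exact: addrACA.
Qed.

Lemma lin_vz : lin vz = 0.
Proof. by rewrite /lin /= !mulr0n !addr0. Qed.

Lemma tauM_add x z : tauM (x + z) = tauM x + tauM z.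
Proof.
rewrite /tauM phi_add mapp_xor -lin_add.
exact: addrACA.
Qed.

Lemma tauM_q x : eqmod2Z (q (tauM x)) (q x).
Proof.
rewrite /tauM; set v := mapp M (phi x).
apply: m2_trans (q_add hA _ _) _.
have h : apx (q (lin v) + 2 * b x (lin v)) (Qf typ Gm v (+) dot v (phi x)).
  by apply: apx_add; [apply: lin_q | apply: lin_b].
case/and4P: hchk => hiso _ _ _.
have := all4P hiso (phi x). rewrite -/v => /negbTE hz; rewrite hz in h.
rewrite -addrA; have := m2_add (m2_refl (q x)) h; rewrite /br /= addr0; exact.
Qed.

Lemma lin_self v : lin v + lin v = 0.
Proof.
rewrite lin_add -lin_vz; congr lin.
by case: v => [[] [] [] []].
Qed.

Lemma sig0 : forall z, tauM z = 0 -> z = 0.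
Proof.
move=> z; rewrite /tauM => h.
have hz : z = lin (mapp M (phi z)).
  have : z + lin (mapp M (phi z)) + lin (mapp M (phi z)) = lin (mapp M (phi z)) by rewrite h add0r.
  by rewrite -addrA lin_self addr0.
have hp : phi z = gam Gm (mapp M (phi z)) by rewrite {1}hz phi_lin.
case/and4P: hchk => _ hinj _ _.
have := all4P hinj (phi z).
have -> : v4eqb (phi z) (gam Gm (mapp M (phi z))) by rewrite -hp; case: (phi z) => [[] [] [] []].
move=> /= /v4eqbP h0.
by rewrite hz h0 mapp_vz lin_vz.
Qed.

Lemma tauM_inj : injective tauM.
Proof.
move=> x z h; apply/eqP; rewrite -subr_eq0; apply/eqP; apply: sig0.
have := tauM_add (x - z) z. rewrite subrK h => /eqP. 
by rewrite -subr_eq => /eqP <-; rewrite subrr.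
Qed.

Lemma phi_y i : (i < 4)%N -> phi (y i) = grow Gm i.
Proof. by move=> hi; rewrite /phi /grow; congr V4; apply: apx_bit; apply: hyg. Qed.

Lemma lin_e0 : lin e0 = y 0. Proof. by rewrite /lin /= !mulr0n !addr0. Qed.
Lemma lin_e1 : lin e1 = y 1. Proof. by rewrite /lin /= !mulr0n add0r !addr0. Qed.
Lemma lin_e2 : lin e2 = y 2. Proof. by rewrite /lin /= !mulr0n !add0r addr0. Qed.
Lemma lin_e3 : lin e3 = y 3. Proof. by rewrite /lin /= !mulr0n !add0r. Qed.

Lemma tauM_y0 : tauM (y 0) = y 2.
Proof.
rewrite /tauM phi_y // -{1}lin_e0 lin_add -lin_e2; congr lin.
by case/and4P: hchk => _ _ /v4eqbP -> _.
Qed.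
Lemma tauM_y1 : tauM (y 1) = y 3.
Proof.
rewrite /tauM phi_y // -{1}lin_e1 lin_add -lin_e3; congr lin.
by case/and4P: hchk => _ _ _ /v4eqbP ->.
Qed.

Lemma lin_in (P : A -> Prop) v : P 0 -> (forall u w, P u -> P w -> P (u + w)) ->
  (forall i, (i < 4)%N -> P (y i)) -> P (lin v).
Proof.
move=> h0 hD hy.
have hm : forall i (a : bool), (i < 4)%N -> P (y i *+ a) by move=> i [] hi; rewrite ?mulr1n ?mulr0n; auto.
by rewrite /lin; apply: (hD); [apply: (hD); [apply: (hD)|]|]; apply: (hm).
Qed.

End Plane.


Lemma apx_opp r c : apx r c -> apx (- r) c.
Proof.
move=> h; apply: m2_trans (m2_opp h) _.
rewrite /eqmod2Z; have -> : (- br c - br c) / 2 = - br c by field.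
by rewrite rpredN br_int.
Qed.

Lemma I2_cases (i : 'I_2) : i = ord0 \/ i = ord_max.
Proof. by case: i => [[|[|]]] // ?; [left|right]; apply/val_inj. Qed.

Lemma Z2_cases (c : 'Z_2) : c = 0 \/ c = 1.
Proof. by case: c => [[|[|]]] // ?; [left|right]; apply/val_inj. Qed.

Section Emb.
Variable (s : seq bool).

Definition rt (j : nat) (a c : 'Z_2) : rat :=
  if nth false s j then q_v2 a c else q_u2 a c.

Lemma q_sumUVE (x : sumUV s) :
  q_sumUV x = \sum_(j < size s) rt j (x j ord0) (x j ord_max).
Proof. by []. Qed.

Lemma rt00 j : rt j 0 0 = 0.
Proof. by rewrite /rt /q_v2 /q_u2; case: nth. Qed.

Lemma x_self (x : sumUV s) : x + x = 0.
Proof.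
apply/matrixP => i j; rewrite !mxE.
case: (Z2_cases (x i j)) => ->; first by rewrite addr0. by apply/val_inj.
Qed.

Lemma q_sumUV_disj (x z : sumUV s) :
  (forall j, (x j ord0 = 0 /\ x j ord_max = 0) \/ (z j ord0 = 0 /\ z j ord_max = 0)) ->
  q_sumUV (x + z) = q_sumUV x + q_sumUV z.
Proof.
move=> hd; rewrite !q_sumUVE -big_split; apply: eq_bigr => j _.
rewrite !mxE; case: (hd j) => [[-> ->]|[-> ->]]; rewrite rt00 ?add0r ?addr0.
- exact: (esym (add0r _)).
- exact: (esym (addr0 _)).
Qed.

Lemma q_delta (k : 'I_(size s)) (i : 'I_2) :
  q_sumUV (delta_mx k i : sumUV s) = br (nth false s k).
Proof.
rewrite q_sumUVE (bigD1 k) //= big1 => [|j hj]; last first.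
  by rewrite !mxE (negbTE hj) /= rt00.
rewrite !mxE eqxx /= addr0 /rt.
by case: (I2_cases i) => ->; case: nth.
Qed.

Lemma q_delta2 (k : 'I_(size s)) :
  apx (q_sumUV (delta_mx k ord0 + delta_mx k ord_max : sumUV s)) true.
Proof.
rewrite q_sumUVE (bigD1 k) //= big1 => [|j hj]; last first.
  by rewrite !mxE (negbTE hj) /= add0r rt00.
rewrite !mxE eqxx /= addr0 /rt.
by case: nth; rewrite /q_v2 /q_u2 /apx /eqmod2Z /br; vm_compute.
Qed.

Lemma q_delta_diff (k k' : 'I_(size s)) (i j : 'I_2) : k != k' ->
  q_sumUV (delta_mx k i + delta_mx k' j : sumUV s) =
  q_sumUV (delta_mx k i : sumUV s) + q_sumUV (delta_mx k' j : sumUV s).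
Proof.
move=> hk; apply: q_sumUV_disj => l; rewrite !mxE.
case hlk : (l == k); last by left.
right; move/eqP: hlk => ->.
by case hkk : (k == k') => //; move: hk; rewrite hkk.
Qed.

Variables (A : finZmodType) (qA : A -> rat) (bA : A -> A -> rat).
Hypothesis hA : is_fqf qA bA.
Variable h : sumUV s -> A.
Hypothesis hh : is_embedding (@q_sumUV s) qA h.

Lemma h_add x z : h (x + z) = h x + h z. Proof. by case: hh. Qed.
Lemma h_inj : injective h. Proof. by case: hh. Qed.
Lemma h_q x : eqmod2Z (qA (h x)) (q_sumUV x). Proof. by case: hh. Qed.
Lemma h0 : h 0 = 0.
Proof. by apply/eqP; rewrite -(addrI (h 0) (_ : h 0 + h 0 = h 0 + 0)) // addr0 -h_add addr0. Qed.
Lemma h_tors x : h x + h x = 0. Proof. by rewrite -h_add x_self h0. Qed.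

Lemma hq_d k i : apx (qA (h (delta_mx k i))) (nth false s k).
Proof. rewrite /apx -(q_delta k i); exact: h_q. Qed.

Lemma hb_same k : apx (2 * bA (h (delta_mx k ord0)) (h (delta_mx k ord_max))) true.
Proof.
apply: apx_cong (tb_q hA _ _) _. rewrite -h_add.
have -> : true = true (+) nth false s k (+) nth false s k by case: nth.
apply: apx_add; [apply: apx_add|]; last apply: apx_opp; last exact: hq_d.
- by apply: apx_cong (h_q _) _; apply: q_delta2.
- by apply: apx_opp; apply: hq_d.
Qed.

Lemma hb_diff k k' i j : k != k' ->
  apx (2 * bA (h (delta_mx k i)) (h (delta_mx k' j))) false.
Proof.
move=> hk; apply: apx_cong (tb_q hA _ _) _. rewrite -h_add.
have -> : false = (nth false s k (+) nth false s k') (+) nth false s k (+) nth false s k'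
  by case: nth; case: nth.
apply: apx_add; [apply: apx_add|]; last apply: apx_opp; last exact: hq_d.
- apply: apx_cong (h_q _) _; rewrite q_delta_diff // !q_delta.
  by apply: apx_add; apply: apx_br.
- by apply: apx_opp; apply: hq_d.
Qed.

End Emb.


Section Main.
Variables (A : finZmodType) (qA : A -> rat) (bA : A -> A -> rat).
Hypothesis hA : is_fqf qA bA.
Variables (s : seq bool) (f g : sumUV s -> A).
Hypothesis hf : is_embedding (@q_sumUV s) qA f.
Hypothesis hg : is_embedding (@q_sumUV s) qA g.

Definition Ob (h : sumUV s -> A) (m : nat) (x : A) : Prop :=
  forall (k : 'I_(size s)) (i : 'I_2), (k < m)%N ->
    eqmodZ (bA x (h (delta_mx k i))) 0.

Definition isoA (t : A -> A) :=
  [/\ (forall x y, t (x + y) = t x + t y), injective t &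
      (forall x, eqmod2Z (qA (t x)) (qA x))].

Lemma apx_sym u v c : apx (2 * bA u v) c -> apx (2 * bA v u) c.
Proof. by move=> h; apply: apx_cong (tb_sym hA v u) h. Qed.

Lemma apx_mZ u v : apx (2 * bA u v) false -> eqmodZ (bA u v) 0.
Proof. by move=> h; apply: m2_mZ2; rewrite mulr0. Qed.

Lemma iso0 (t : A -> A) : (forall x y, t (x + y) = t x + t y) -> t 0 = 0.
Proof. move=> ht; have h := ht 0 0; rewrite addr0 in h; apply: (addrI (t 0)); by rewrite addr0 -h. Qed.

Lemma main_ind m : (m <= size s)%N ->
  exists t, isoA t /\ forall x, Ob f m x <-> Ob g m (t x).
Proof.
elim: m => [|m IH] hm.
  exists id; split; first by split => // x; apply: m2_refl.
  by move=> x; split => _ k i.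
have hm' : (m < size s)%N := hm.
have [t [[tadd tinj tq] ht]] := IH (ltnW hm).
set km := Ordinal hm'.
pose y := fun i : nat => match i with
  | 0 => t (f (delta_mx km ord0)) | 1 => t (f (delta_mx km ord_max))
  | 2 => g (delta_mx km ord0) | _ => g (delta_mx km ord_max) end.
set typ := nth false s km.
pose kk := V4 (bit (2 * bA (y 0) (y 2))) (bit (2 * bA (y 0) (y 3)))
              (bit (2 * bA (y 1) (y 2))) (bit (2 * bA (y 1) (y 3))).
have t0 := iso0 tadd.
have hy2 : forall i, (i < 4)%N -> y i + y i = 0.
  case=> [|[|[|[|]]]] // _; rewrite /y ?(h_tors hg) // -tadd ?(h_tors hf) //.
have hyq : forall i, (i < 4)%N -> apx (qA (y i)) typ.
  case=> [|[|[|[|]]]] // _; rewrite /y.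
  - exact: apx_cong (tq _) (hq_d hf _ _).
  - exact: apx_cong (tq _) (hq_d hf _ _).
  - exact: hq_d hg _ _.
  - exact: hq_d hg _ _.
have tbt : forall u v, eqmod2Z (2 * bA (t u) (t v)) (2 * bA u v).
  by move=> u v; apply: mZ_m2; exact: (iso_b hA tadd tq u v).
have hyg : forall i j, (i < 4)%N -> (j < 4)%N -> apx (2 * bA (y i) (y j)) (GmOf kk i j).
  have hdiag : forall i, (i < 4)%N -> apx (2 * bA (y i) (y i)) false.
    by move=> i hi; exact: (q_tors hA (hy2 i hi) (hyq i hi)).
  have hint : forall i j, (j < 4)%N -> apx (2 * bA (y i) (y j)) (bit (2 * bA (y i) (y j))).
    by move=> i j hj; apply: apx_of_int; exact: (tb_int hA (y i) (hy2 j hj)).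
  have h01 : apx (2 * bA (y 0) (y 1)) true.
    by apply: apx_cong (tbt _ _) _; exact: (hb_same hA hf km).
  have h23 : apx (2 * bA (y 2) (y 3)) true by exact: (hb_same hA hg km).
  case=> [|[|[|[|]]]] //; case=> [|[|[|[|]]]] // _ _;
    first [ exact: (hdiag 0) | exact: (hdiag 1) | exact: (hdiag 2) | exact: (hdiag 3)
          | exact: h01 | exact: (apx_sym h01) | exact: h23 | exact: (apx_sym h23)
          | exact: hint | (apply: apx_sym; exact: hint) ].
have hchk := check_all typ kk.
pose tt := tauM bA y (chooseM typ kk).
have ttadd := tauM_add hA (chooseM typ kk) hy2.
have ttinj := tauM_inj hA hy2 hyg hchk.
have ttq := tauM_q hA hy2 hyq hyg hchk.
have tty0 := tauM_y0 hy2 hyg hchk.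
have tty1 := tauM_y1 hy2 hyg hchk.
exists (fun x => tt (t x)); split.
  split => [x z|x z /= /ttinj /tinj //|x /=]; first by rewrite /= tadd /tt ttadd.
  exact: m2_trans (ttq _) (tq _).
have Pg0 : Ob g m 0 by move=> k i _; apply: mZ_int; exact: (b0l hA).
have PgD : forall u w, Ob g m u -> Ob g m w -> Ob g m (u + w).
  move=> u w hu hw k i hk; apply: mZ_trans (b_addl hA _ _ _) _.
  by rewrite -(addr0 0); apply: mZ_add; [apply: hu|apply: hw].
have Pgy : forall i, (i < 4)%N -> Ob g m (y i).
  have hne : forall k : 'I_(size s), (k < m)%N -> km != k.
    by move=> k hk; apply/eqP => hkk; move: hk; rewrite -hkk /= ltnn.
  case=> [|[|[|[|]]]] // _; rewrite /y.
  - apply/ht => k i hk; apply: apx_mZ; exact: (hb_diff hA hf ord0 i (hne _ hk)).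
  - apply/ht => k i hk; apply: apx_mZ; exact: (hb_diff hA hf ord_max i (hne _ hk)).
  - move=> k i hk; apply: apx_mZ; exact: (hb_diff hA hg ord0 i (hne _ hk)).
  - move=> k i hk; apply: apx_mZ; exact: (hb_diff hA hg ord_max i (hne _ hk)).
have Plin : forall v, Ob g m (lin y v) by move=> v; apply: lin_in.
have ttb : forall u v, eqmodZ (bA (tt u) (tt v)) (bA u v).
  by move=> u v; exact: (iso_b hA ttadd ttq u v).
have tb : forall u v, eqmodZ (bA (t u) (t v)) (bA u v).
  by move=> u v; exact: (iso_b hA tadd tq u v).
have split_m : forall (h : sumUV s -> A) x, Ob h m.+1 x <->
   [/\ Ob h m x, eqmodZ (bA x (h (delta_mx km ord0))) 0 & eqmodZ (bA x (h (delta_mx km ord_max))) 0].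
  move=> h x; split.
    move=> H; split; first by move=> k i hk; apply: H; apply: ltnW.
    - by apply: H.
    - by apply: H.
  case=> H H0 H1 k i; rewrite ltnS leq_eqVlt => /orP [/eqP hk|hk]; last exact: H.
  have -> : k = km by apply/val_inj.
  by case: (I2_cases i) => ->.
have zeq : forall a c, eqmodZ a c -> (eqmodZ a 0 <-> eqmodZ c 0).
  move=> a c hac; split => hh; [apply: mZ_trans (mZ_sym hac) hh | apply: mZ_trans hac hh].
move=> x; rewrite /= split_m split_m.
have Hinv : forall z, Ob g m z <-> Ob g m (tt z).
  move=> z; rewrite /tt /tauM; split => hz.
    by apply: PgD.
  have -> : z = z + lin y (mapp (chooseM typ kk) (phi bA y z)) + lin y (mapp (chooseM typ kk) (phi bA y z)).
    by rewrite -addrA (lin_self hy2) addr0.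
  by apply: PgD.
split.
- case=> H H0 H1; split.
  + by apply: (proj1 (Hinv _)); apply: (proj1 (ht _)).
  + rewrite -[g _]/(y 2) -tty0; apply/(zeq _ _ (ttb _ _)).
    by apply/(zeq _ _ (tb _ _)).
  + rewrite -[g _]/(y 3) -tty1; apply/(zeq _ _ (ttb _ _)).
    by apply/(zeq _ _ (tb _ _)).
- case=> H H0 H1; split.
  + by apply: (proj2 (ht _)); apply: (proj2 (Hinv _)).
  + apply/(zeq _ _ (tb _ _)); apply/(zeq _ _ (ttb _ _)).
    have -> : tt (t (f (delta_mx km ord0))) = g (delta_mx km ord0) by exact: tty0.
    exact: H0.
  + apply/(zeq _ _ (tb _ _)); apply/(zeq _ _ (ttb _ _)).
    have -> : tt (t (f (delta_mx km ord_max))) = g (delta_mx km ord_max) by exact: tty1.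
    exact: H1.
Qed.

End Main.


Lemma orth_Ob (A : finZmodType) (qA : A -> rat) (bA : A -> A -> rat)
  (hA : is_fqf qA bA) (s : seq bool) (h : sumUV s -> A)
  (hh : is_embedding (@q_sumUV s) qA h) x :
  x \in orth_compl bA h <-> Ob bA h (size s) x.
Proof.
rewrite inE; split.
  by move/forallP => H k i _; apply: H.
move=> H; apply/forallP => z; rewrite (matrix_sum_delta z).
pose P u := eqmodZ (bA x (h u)) 0.
have P0 : P 0 by rewrite /P (h0 hh); apply: mZ_int; exact: (b0r hA).
have PD : forall u w, P u -> P w -> P (u + w).
  move=> u w hu hw; rewrite /P (h_add hh); apply: mZ_trans (b_addr hA _ _ _) _.
  by rewrite -(addr0 0); apply: mZ_add.
apply: (big_ind P) => // k _.
apply: (big_ind P) => // i _.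
case: (Z2_cases (z k i)) => ->; first by rewrite scale0r.
by rewrite scale1r; apply: H; apply: ltn_ord.
Qed.

Theorem lemma7p6 (A : finZmodType) (qA : A -> rat) (bA : A -> A -> rat)
  (hA : is_fqf qA bA) (hnd : fqf_nondegenerate bA) (s : seq bool)
  (f g : sumUV s -> A)
  (hf : is_embedding (@q_sumUV s) qA f) (hg : is_embedding (@q_sumUV s) qA g) :
  isometric_sub qA (orth_compl bA f) (orth_compl bA g).
Proof.
have [t [[tadd tinj tq] ht]] := main_ind hA hf hg (leqnn (size s)).
have [ti tK tK'] := injF_bij tinj.
exists t; split.
- by move=> x z _ _; apply: tadd.
- by move=> x /(orth_Ob hA hf) hx; apply/(orth_Ob hA hg); apply/ht.
- by move=> x z _ _; apply: tinj.
- move=> w /(orth_Ob hA hg) hw; exists (ti w); last by rewrite tK'.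
  by apply/(orth_Ob hA hf); apply/ht; rewrite tK'.
- by move=> x _; apply: tq.
Qed.
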